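(* Let $N_1$ and $N_2$ be tree-child phylogenetic networks labeled in the same finite set $S$, each satisfying that no two parents of a hybrid node are connected by a path. Then $N_1\cong N_2$ if and only if $C(N_1)=C(N_2)$.
   Context: A DAG is labeled in $S$ if its leaves (out-degree 0) are bijectively labeled by $S$; isomorphism $\cong$ means isomorphism of directed graphs preserving leaf labels. A tree node has in-degree at most 1; a hybrid node has in-degree greater than 1; a tree child is a child that is a tree node. A tree-child phylogenetic network is a rooted DAG labeled in $S$ in which every non-leaf node has at least one tree child, no tree node has out-degree 1, and every hybrid node has out-degree exactly 1. ''No two parents of a hybrid node are connected by a path'' means: if $u_1,u_2$ are parents of a hybrid node, there is no path $u_1\rightsquigarrow u_2$ nor $u_2\rightsquigarrow u_1$. For a node $v$, $C(v)$ is the set of leaves that are descendants of $v$, and $C(N)=\{C(v)\mid v\text{ a node of }N\}$. *)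

(* Defs.v *)
From mathcomp Require Import all_boot.
Set Implicit Arguments. Unset Strict Implicit. Unset Printing Implicit Defensive.

Record network (S : finType) := Network {
  node : finType;
  edge : rel node;
  lbl  : S -> node }.

Section Defs.
Variable S : finType.
Implicit Type N : network S.

Definition indeg N (v : node N) := #|[pred u | @edge S N u v]|.
Definition outdeg N (v : node N) := #|[pred w | @edge S N v w]|.
Definition is_leaf N (v : node N) := outdeg v == 0.
Definition tree_node N (v : node N) := indeg v <= 1.
Definition hybrid_node N (v : node N) := 1 < indeg v.

Definition acyclic N := forall u v : node N, @edge S N u v -> ~~ connect (@edge S N) v u.

Definition rooted N := exists r : node N, forall v, connect (@edge S N) r v.

Definition labeled_in N :=
  injective (@lbl S N) /\ forall v : node N, is_leaf v <-> exists s, @lbl S N s = v.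

Definition tree_child_network N :=
  [/\ acyclic N, rooted N & labeled_in N] /\ [/\
      (forall v : node N, ~~ is_leaf v -> exists2 w, @edge S N v w & tree_node w),
      (forall v : node N, tree_node v -> outdeg v != 1) &
      (forall v : node N, hybrid_node v -> outdeg v = 1)].

Definition no_parent_paths N :=
  forall h u1 u2 : node N, hybrid_node h -> @edge S N u1 h -> @edge S N u2 h ->
    u1 != u2 -> ~~ connect (@edge S N) u1 u2.

Definition net_iso (N1 N2 : network S) :=
  exists f : node N1 -> node N2,
    [/\ bijective f,
        (forall x y, @edge S N2 (f x) (f y) = @edge S N1 x y) &
        (forall s, f (@lbl S N1 s) = @lbl S N2 s)].

Definition cluster N (v : node N) : {set S} := [set s | connect (@edge S N) v (@lbl S N s)].
Definition clusters N : {set {set S}} := [set cluster v | v : node N].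
End Defs.

(* Main.v *)
Require Import Defs.
From mathcomp Require Import all_boot.
Set Implicit Arguments. Unset Strict Implicit. Unset Printing Implicit Defensive.

Section Gen.
Variable T : finType.
Variable e : rel T.
Lemma connect_last x y : connect e x y -> x != y -> exists2 z, connect e x z & e z y.
Proof.
move=> /connectP [p]; elim/last_ind: p => [|p z _] /=; first by move=> _ -> /eqP.
rewrite rcons_path last_rcons => /andP [pp ez] -> _.
exists (last x p) => //; apply/connectP; by exists p.
Qed.
Lemma connect_first x y : connect e x y -> x != y -> exists2 z, e x z & connect e z y.
Proof.
move=> /connectP [[|z p]] /=; first by move=> _ -> /eqP.
move=> /andP [ez pp] -> _; exists z => //; apply/connectP; by exists p.
Qed.
End Gen.

Definition TE (S : finType) (Cl : {set {set S}}) (A B : {set S}) :=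
  B \proper A /\ forall X, X \in Cl -> B \proper X -> A \subset X.
Definition MIN (S : finType) (Cl : {set {set S}}) (A B : {set S}) :=
  B \proper A /\ forall X, X \in Cl -> B \proper X -> X \subset A -> X = A.
Definition HB (S : finType) (Cl : {set {set S}}) (B : {set S}) :=
  (exists2 X, X \in Cl & B \proper X) /\ ~ (exists2 A, A \in Cl & TE Cl A B).

Definition child (S : finType) (N : network S) (v : node N) : node N :=
  odflt v [pick w | @edge S N v w].

Section Net.
Variable S : finType.
Variable N : network S.
Hypothesis tcN : tree_child_network N.
Hypothesis nppN : no_parent_paths N.
Local Notation e := (@edge S N).
Local Notation conn := (connect (@edge S N)).
Local Notation C := (@cluster S N).
Implicit Types u v w x y z p q h c a b t : node N.

Lemma acycN : acyclic N. Proof. by case: tcN => [[? ? ?] _]. Qed.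
Lemma labN : labeled_in N. Proof. by case: tcN => [[? ? l] _]. Qed.
Lemma tchildN v : ~~ is_leaf v -> exists2 w, e v w & tree_node w.
Proof. by case: tcN => _ [H _ _]; apply: H. Qed.
Lemma tree_out1 v : tree_node v -> outdeg v != 1.
Proof. by case: tcN => _ [_ H _]; apply: H. Qed.
Lemma hyb_out v : hybrid_node v -> outdeg v = 1.
Proof. by case: tcN => _ [_ _ H]; apply: H. Qed.

Lemma anti u v : conn u v -> conn v u -> u = v.
Proof.
move=> uv vu; apply/eqP; apply/negPn/negP => neq.
case: (connect_first uv neq) => w euw wv.
by have := acycN euw; rewrite (connect_trans wv vu).
Qed.

Lemma edge_neq u v : e u v -> u != v.
Proof. by move=> uv; apply/eqP => E; subst; have := acycN uv; rewrite connect0. Qed.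

Lemma edge_back u v : e u v -> conn v u -> False.
Proof. by move=> uv vu; have := acycN uv; rewrite vu. Qed.

Lemma tree_hyb v : tree_node v = ~~ hybrid_node v.
Proof. by rewrite /tree_node /hybrid_node -leqNgt. Qed.

Lemma tree_par v p q : tree_node v -> e p v -> e q v -> p = q.
Proof. by move=> /card_le1_eqP H pv qv; apply: H; rewrite inE. Qed.

Lemma hyb_child h c (c' : node N) : hybrid_node h -> e h c -> e h c' -> c = c'.
Proof.
move=> /hyb_out H; have : outdeg h <= 1 by rewrite H.
by move=> /card_le1_eqP H' hc hc'; apply: H'; rewrite inE.
Qed.

Lemma hyb_notleaf h : hybrid_node h -> ~~ is_leaf h.
Proof. by move=> /hyb_out; rewrite /is_leaf => ->. Qed.

Lemma hyb_child_tree h c : hybrid_node h -> e h c -> tree_node c.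
Proof.
move=> hh hc; have [w hw tw] := tchildN (hyb_notleaf hh).
by rewrite (hyb_child hh hc hw).
Qed.

Lemma hyb_par2 h : hybrid_node h -> exists q1 q2, [/\ e q1 h, e q2 h & q1 != q2].
Proof. by move=> /card_gt1P [x [y [xh yh xy]]]; exists x, y; rewrite !inE in xh yh. Qed.

Lemma hyb_par_tree q h : hybrid_node h -> e q h -> tree_node q.
Proof.
move=> hh qh; rewrite tree_hyb; apply/negP => hq.
by have := hyb_child_tree hq qh; rewrite tree_hyb hh.
Qed.

Lemma leaf_noedge v w : is_leaf v -> e v w = false.
Proof.
rewrite /is_leaf /outdeg => /eqP /card0_eq /(_ w); by rewrite inE.
Qed.

Lemma leaf_tree v : is_leaf v -> tree_node v.
Proof.
move=> lv; rewrite tree_hyb; apply/negP => /hyb_notleaf; by rewrite lv.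
Qed.

Lemma lbl_leaf s : is_leaf (@lbl S N s).
Proof. by apply/(proj2 labN); exists s. Qed.

Lemma conn_leaf v w : is_leaf v -> conn v w -> w = v.
Proof.
move=> lv vw; apply/eqP; apply/negPn/negP; rewrite eq_sym => neq.
by case: (connect_first vw neq) => z; rewrite leaf_noedge.
Qed.

Lemma cluster_lbl s : C (@lbl S N s) = [set s].
Proof.
apply/setP => s'; rewrite !inE; apply/idP/idP.
  by move=> /(conn_leaf (lbl_leaf s)) /(proj1 labN) ->.
by move=> /eqP ->; apply: connect0.
Qed.

Lemma clusterS u v : conn u v -> C v \subset C u.
Proof. by move=> uv; apply/subsetP => s; rewrite !inE; apply: connect_trans. Qed.

Definition te := [rel x y : node N | e x y && tree_node y].

Lemma te_conn x y : connect te x y -> conn x y.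
Proof. by apply: connect_sub => a b /andP [ab _]; apply: connect1. Qed.

Lemma desc_lt v w : e v w -> #|[pred x | conn w x]| < #|[pred x | conn v x]|.
Proof.
move=> vw; apply: proper_card; apply/properP; split.
  by apply/subsetP => x; rewrite !inE; apply: connect_trans (connect1 vw).
by exists v; rewrite !inE ?connect0 //; apply: acycN.
Qed.

Lemma anc_lt p u : e p u -> #|[pred x | conn x p]| < #|[pred x | conn x u]|.
Proof.
move=> pu; apply: proper_card; apply/properP; split.
  by apply/subsetP => x; rewrite !inE => xp; apply: connect_trans xp (connect1 pu).
by exists u; rewrite !inE ?connect0 //; apply: acycN.
Qed.

Lemma tree_leaf v : exists s, conn v (@lbl S N s) /\
  forall u, conn u (@lbl S N s) -> conn u v \/ connect te v u.
Proof.
move: {2}#|_| (leqnn #|[pred x | conn v x]|) => n; elim: n v => [|n IH] v Hn.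
  have H : 0 < #|[pred x | conn v x]| by apply/card_gt0P; exists v; rewrite inE connect0.
  by rewrite leqn0 in Hn; rewrite (eqP Hn) in H.
case: (boolP (is_leaf v)) => lv.
  have [s <-] := (proj1 ((proj2 labN) v)) lv.
  by exists s; split => [|u H]; [apply: connect0 | left].
have [w vw tw] := tchildN lv.
have [s [ws Hs]] := IH w (leq_trans (desc_lt vw) Hn).
exists s; split; first by apply: connect_trans (connect1 vw) ws.
move=> u /Hs [uw|wu].
  case: (eqVneq u w) => [->|nuw].
    by right; apply: connect1; rewrite /= vw tw.
  have [x ux xw] := connect_last uw nuw.
  by left; rewrite (tree_par tw vw xw).
by right; apply: connect_trans (connect1 _) wu; rewrite /= vw tw.
Qed.


Lemma chain x y u : connect te x u -> connect te y u ->
  connect te x y \/ connect te y x.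
Proof.
move: {2}#|_| (leqnn #|[pred z | conn z u]|) => n; elim: n u => [|n IH] u Hn xu yu.
  have H : 0 < #|[pred z | conn z u]| by apply/card_gt0P; exists u; rewrite inE connect0.
  by rewrite leqn0 in Hn; rewrite (eqP Hn) in H.
case: (eqVneq x u) => [Exu|nxu]; first by right; rewrite Exu.
case: (eqVneq y u) => [Eyu|nyu]; first by left; rewrite Eyu.
have [p xp /andP [pu tu]] := connect_last xu nxu.
have [q yq /andP [qu _]] := connect_last yu nyu.
rewrite -(tree_par tu pu qu) in yq.
exact: IH p (leq_trans (anc_lt pu) Hn) xp yq.
Qed.

Lemma cl_comp u v : C v \subset C u -> conn u v \/ conn v u.
Proof.
move=> /subsetP sub; have [s [vs Hs]] := tree_leaf v.
have : s \in C u by apply: sub; rewrite inE.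
rewrite inE => /Hs [|/te_conn]; by [left | right].
Qed.

Lemma outdeg2 b : tree_node b -> ~~ is_leaf b -> 1 < outdeg b.
Proof.
move=> tb lb; have := tree_out1 tb; move: lb; rewrite /is_leaf.
by case: (outdeg b) => [|[|k]].
Qed.

Lemma other_child b x : tree_node b -> e b x -> exists2 w, e b w & w != x.
Proof.
move=> tb bx; have lb : ~~ is_leaf b by apply/negP => /leaf_noedge Hl; rewrite Hl in bx.
have /card_gt1P [y [z [yb zb yz]]] := outdeg2 tb lb.
rewrite !inE in yb zb.
case: (eqVneq y x) => [Eyx|nyx]; last by exists y.
by exists z => //; rewrite -Eyx eq_sym.
Qed.

Lemma tree_inj a b : tree_node a -> tree_node b -> C a = C b -> a = b.
Proof.
wlog ba : a b / conn b a.
  move=> W ta tb Eab; have sub : C b \subset C a by rewrite Eab subxx.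
  have [ab|ba] := cl_comp sub; last by apply: W.
  by symmetry; apply: W => //.
move=> ta tb Eab; apply/eqP; apply/negPn/negP => nab.
have [s [bs Hs]] := tree_leaf b.
have : s \in C a by rewrite Eab inE.
rewrite inE => /Hs [ab|bTa]; first by rewrite (anti ab ba) eqxx in nab.
have nba : b != a by rewrite eq_sym.
have [x /andP [bx tx] xTa] := connect_first bTa nba.
have [w bw nwx] := other_child tb bx.
have [s' [ws' Hs']] := tree_leaf w.
have : s' \in C a by rewrite Eab inE; apply: connect_trans (connect1 bw) ws'.
rewrite inE => /Hs' [aw|wTa].
  have xw : conn x w := connect_trans (te_conn xTa) aw.
  have nxw : x != w by rewrite eq_sym.
  have [y xy yw] := connect_last xw nxw.
  case: (boolP (tree_node w)) => tw.
    rewrite -(tree_par tw bw yw) in xy; exact: edge_back bx xy.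
  have hw : hybrid_node w by rewrite tree_hyb negbK in tw.
  case: (eqVneq b y) => [Eby|nby].
    by rewrite -Eby in xy; exact: edge_back bx xy.
  have := nppN hw bw yw nby.
  by rewrite (connect_trans (connect1 bx) xy).
have [wx|xw] := chain wTa xTa.
  have [y wy /andP [yx _]] := connect_last wx nwx.
  rewrite -(tree_par tx bx yx) in wy; exact: edge_back bw (te_conn wy).
have nxw : x != w by rewrite eq_sym.
have [y xy /andP [yw tw]] := connect_last xw nxw.
rewrite -(tree_par tw bw yw) in xy; exact: edge_back bx (te_conn xy).
Qed.

Lemma tree_sub a b : tree_node a -> tree_node b -> C b \subset C a -> conn a b.
Proof.
move=> ta tb sub; have [//|ba] := cl_comp sub.
have sub2 : C a \subset C b by apply: clusterS.
have E : C a = C b by apply/eqP; rewrite eqEsubset sub2 sub.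
by rewrite (tree_inj ta tb E) connect0.
Qed.

Lemma tree_proper a b : tree_node a -> tree_node b ->
  (C b \proper C a) <-> (conn a b /\ a != b).
Proof.
move=> ta tb; split.
  move=> /properP [sub [s sa sb]]; split; first exact: tree_sub.
  by apply/eqP => E; subst; rewrite sa in sb.
move=> [ab nab]; rewrite properEneq (clusterS ab) andbT.
by apply/eqP => E; rewrite (tree_inj ta tb (esym E)) eqxx in nab.
Qed.

Lemma hyb_cl h c : hybrid_node h -> e h c -> C h = C c.
Proof.
move=> hh hc; apply/eqP; rewrite eqEsubset (clusterS (connect1 hc)) andbT.
apply/subsetP => s; rewrite !inE => hs.
have nh : h != @lbl S N s.
  apply/eqP => E; have := leaf_tree (lbl_leaf s); by rewrite -E tree_hyb hh.
have [z hz zs] := connect_first hs nh; by rewrite (hyb_child hh hc hz).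
Qed.

Lemma tree_rep v : exists2 t, tree_node t & C t = C v.
Proof.
case: (boolP (tree_node v)) => tv; first by exists v.
have hv : hybrid_node v by rewrite tree_hyb negbK in tv.
have [c hc tc] := tchildN (hyb_notleaf hv).
by exists c => //; symmetry; apply: hyb_cl.
Qed.

Lemma clustersP X : X \in clusters N <-> exists2 t, tree_node t & X = C t.
Proof.
split.
  move=> /imsetP [v _ ->]; have [t tt Et] := tree_rep v; by exists t => //; exact: esym Et.
by move=> [t _ ->]; apply/imsetP; exists t.
Qed.

Lemma edge_TT a b : tree_node a -> tree_node b ->
  e a b <-> TE (clusters N) (C a) (C b).
Proof.
move=> ta tb; split.
  move=> ab; split.
    by apply/tree_proper => //; split; [apply: connect1 | apply: edge_neq].
  move=> X /clustersP [z tz ->] /(tree_proper tz tb) [zb nzb].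
  have [y zy yb] := connect_last zb nzb.
  rewrite -(tree_par tb ab yb) in zy; exact: clusterS.
move=> [/(tree_proper ta tb) [ab nab] H].
have [p ap pb] := connect_last ab nab.
case: (boolP (tree_node p)) => tp.
  have pb' : C b \proper C p.
    by apply/tree_proper => //; split; [apply: connect1 | apply: edge_neq].
  have inp : C p \in clusters N by apply/clustersP; exists p.
  have pa : conn p a := tree_sub tp ta (H _ inp pb').
  by rewrite (anti ap pa).
have hp : hybrid_node p by rewrite tree_hyb negbK in tp.
have [q1 [q2 [q1p q2p nq]]] := hyb_par2 hp.
have key : forall q, e q p -> conn q a.
  move=> q qp; have tq := hyb_par_tree hp qp.
  apply: (tree_sub tq ta); apply: H; first by apply/clustersP; exists q.
  apply/tree_proper => //; split; first exact: connect_trans (connect1 qp) (connect1 pb).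
  apply/eqP => E; rewrite E in qp; exact: edge_back qp (connect1 pb).
have nap : a != p by apply/eqP => E; rewrite E tree_hyb hp in ta.
have [q aq qp] := connect_last ap nap.
have E1 : q1 = q.
  apply/eqP; apply/negPn/negP => n1; have := nppN hp q1p qp n1.
  by rewrite (connect_trans (key _ q1p) aq).
have E2 : q2 = q.
  apply/eqP; apply/negPn/negP => n1; have := nppN hp q2p qp n1.
  by rewrite (connect_trans (key _ q2p) aq).
by rewrite E1 E2 eqxx in nq.
Qed.

Lemma edge_TH a b h : tree_node a -> tree_node b -> hybrid_node h -> e h b ->
  e a h <-> MIN (clusters N) (C a) (C b).
Proof.
move=> ta tb hh hb; split.
  move=> ah; split.
    apply/tree_proper => //; split; first exact: connect_trans (connect1 ah) (connect1 hb).
    apply/eqP => E; rewrite E in ah; exact: edge_back ah (connect1 hb).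
  move=> X /clustersP [z tz ->] /(tree_proper tz tb) [zb nzb] za.
  have [y zy yb] := connect_last zb nzb.
  rewrite -(tree_par tb hb yb) in zy.
  have nzh : z != h by apply/eqP => E; rewrite E tree_hyb hh in tz.
  have [q zq qh] := connect_last zy nzh.
  have az := tree_sub ta tz za.
  have Eq : a = q.
    apply/eqP; apply/negPn/negP => n; have := nppN hh ah qh n.
    by rewrite (connect_trans az zq).
  by rewrite -Eq in zq; rewrite (anti az zq).
move=> [/(tree_proper ta tb) [ab nab] H].
have [y ay yb] := connect_last ab nab.
rewrite (tree_par tb yb hb) in ay.
have nah : a != h by apply/eqP => E; rewrite E tree_hyb hh in ta.
have [q aq qh] := connect_last ay nah.
have tq := hyb_par_tree hh qh.
have E : C q = C a.
  apply: H; [by apply/clustersP; exists q | | exact: clusterS].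
  apply/tree_proper => //; split; first exact: connect_trans (connect1 qh) (connect1 hb).
  apply/eqP => E; rewrite E in qh; exact: edge_back qh (connect1 hb).
by rewrite -(tree_inj tq ta E).
Qed.

Lemma edge_HB b : tree_node b ->
  (exists2 h, hybrid_node h & e h b) <-> HB (clusters N) (C b).
Proof.
move=> tb; split.
  move=> [h hh hb]; have [q1 [_ [q1h _ _]]] := hyb_par2 hh.
  have tq := hyb_par_tree hh q1h.
  split.
    exists (C q1); first by apply/clustersP; exists q1.
    apply/tree_proper => //; split; first exact: connect_trans (connect1 q1h) (connect1 hb).
    apply/eqP => E; rewrite E in q1h; exact: edge_back q1h (connect1 hb).
  move=> [A /clustersP [a ta ->] /(edge_TT ta tb) ab].
  by rewrite (tree_par tb ab hb) tree_hyb hh in ta.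
move=> [[X /clustersP [z tz ->] /(tree_proper tz tb) [zb nzb]] nT].
have [p _ pb] := connect_last zb nzb.
case: (boolP (tree_node p)) => tp; last by exists p => //; rewrite tree_hyb negbK in tp.
exfalso; apply: nT; exists (C p); first by apply/clustersP; exists p.
exact/(edge_TT tp tb).
Qed.

Lemma child_spec h : hybrid_node h -> e h (child h).
Proof.
move=> hh; rewrite /child; case: pickP => [//|H].
have : 0 < outdeg h by rewrite (hyb_out hh).
by move=> /card_gt0P [w]; rewrite inE H.
Qed.

End Net.

Definition tmap (S : finType) (N1 N2 : network S) (d : node N2) (v : node N1) : node N2 :=
  odflt d [pick w | tree_node w && (@cluster S N2 w == @cluster S N1 v)].
Definition fmap (S : finType) (N1 N2 : network S) (d : node N2) (v : node N1) : node N2 :=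
  if tree_node v then tmap d v
  else odflt d [pick p | @edge S N2 p (tmap d (child v)) && hybrid_node p].

Section Cross.
Variable S : finType.
Variables N1 N2 : network S.
Hypothesis tc1 : tree_child_network N1.
Hypothesis tc2 : tree_child_network N2.
Hypothesis npp1 : no_parent_paths N1.
Hypothesis npp2 : no_parent_paths N2.
Hypothesis eqCl : clusters N1 = clusters N2.
Variable d : node N2.

Lemma tmap_spec (t : node N1) : tree_node t ->
  tree_node (tmap d t) /\ cluster (tmap d t) = cluster t.
Proof.
move=> tt; rewrite /tmap; case: pickP => [w /andP [tw /eqP cw] | H]; first by [].
exfalso; have : cluster t \in clusters N2 by rewrite -eqCl; apply/imsetP; exists t.
move=> /(clustersP tc2) [w tw Ew]; have := H w; by rewrite tw -Ew eqxx.
Qed.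

Lemma fmap_tree (t : node N1) : tree_node t -> fmap d t = tmap d t.
Proof. by rewrite /fmap => ->. Qed.

Lemma fmap_hyb (h : node N1) : hybrid_node h ->
  hybrid_node (fmap d h) /\ @edge S N2 (fmap d h) (tmap d (child h)).
Proof.
move=> hh; rewrite /fmap tree_hyb hh /=.
have hb := child_spec tc1 hh; have tb := hyb_child_tree tc1 hh hb.
have [tfb cfb] := tmap_spec tb.
have : HB (clusters N2) (cluster (tmap d (child h))).
  rewrite cfb -eqCl; apply/(edge_HB tc1 npp1 tb); by exists h.
move=> /(edge_HB tc2 npp2 tfb) [p hp pb].
case: pickP => [q /andP [qb hq] | H]; first by [].
by have := H p; rewrite pb hp.
Qed.

Lemma fmap_edge (x y : node N1) : @edge S N1 x y -> @edge S N2 (fmap d x) (fmap d y).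
Proof.
move=> xy; case: (boolP (tree_node x)) => tx; case: (boolP (tree_node y)) => ty.
- rewrite !fmap_tree //; have [tfx cfx] := tmap_spec tx; have [tfy cfy] := tmap_spec ty.
  apply/(edge_TT tc2 npp2 tfx tfy); rewrite cfx cfy -eqCl.
  exact/(edge_TT tc1 npp1 tx ty).
- have hy : hybrid_node y by rewrite tree_hyb negbK in ty.
  have hb := child_spec tc1 hy; have tb := hyb_child_tree tc1 hy hb.
  have [hfy fyb] := fmap_hyb hy.
  have [tfb cfb] := tmap_spec tb; have [tfx cfx] := tmap_spec tx.
  rewrite fmap_tree //; apply/(edge_TH tc2 npp2 tfx tfb hfy fyb).
  rewrite cfx cfb -eqCl; exact/(edge_TH tc1 npp1 tx tb hy hb).
- have hx : hybrid_node x by rewrite tree_hyb negbK in tx.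
  have [hfx fxb] := fmap_hyb hx.
  by rewrite (fmap_tree ty) -(hyb_child tc1 hx (child_spec tc1 hx) xy).
- have hx : hybrid_node x by rewrite tree_hyb negbK in tx.
  by have := hyb_child_tree tc1 hx xy; rewrite (negbTE ty).
Qed.

End Cross.

Lemma tmap_cancel (S : finType) (N1 N2 : network S) :
  tree_child_network N1 -> tree_child_network N2 ->
  no_parent_paths N1 -> no_parent_paths N2 -> clusters N1 = clusters N2 ->
  forall (d : node N2) (d' : node N1) (t : node N1), tree_node t ->
  tmap d' (tmap d t) = t.
Proof.
move=> tc1 tc2 npp1 npp2 eqCl d d' t tt.
have [tw cw] := tmap_spec tc2 eqCl d tt.
have [tw' cw'] := tmap_spec tc1 (esym eqCl) d' tw.
by apply: (tree_inj tc1 npp1 tw' tt); rewrite cw' cw.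
Qed.

Lemma fmap_cancel (S : finType) (N1 N2 : network S) :
  tree_child_network N1 -> tree_child_network N2 ->
  no_parent_paths N1 -> no_parent_paths N2 -> clusters N1 = clusters N2 ->
  forall (d : node N2) (d' : node N1) (v : node N1), fmap d' (fmap d v) = v.
Proof.
move=> tc1 tc2 npp1 npp2 eqCl d d' v.
case: (boolP (tree_node v)) => tv.
  have [tw _] := tmap_spec tc2 eqCl d tv.
  rewrite (fmap_tree d tv) (fmap_tree d' tw).
  exact: tmap_cancel.
have hv : hybrid_node v by rewrite tree_hyb negbK in tv.
have [hp pb] := fmap_hyb tc1 tc2 npp1 npp2 eqCl d hv.
have hb := child_spec tc1 hv; have tb := hyb_child_tree tc1 hv hb.
move: hp pb; set p := fmap d v => hp pb.
rewrite {1}/fmap tree_hyb hp /=.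
rewrite (hyb_child tc2 hp (child_spec tc2 hp) pb).
rewrite (tmap_cancel tc1 tc2 npp1 npp2 eqCl d d' tb).
case: pickP => [q /andP [qb hq] | H]; first exact: tree_par tb qb hb.
by have := H v; rewrite hb hv.
Qed.

Lemma conn_map (T1 T2 : finType) (e1 : rel T1) (e2 : rel T2) (f : T1 -> T2) :
  (forall x y, e1 x y -> e2 (f x) (f y)) ->
  forall x y, connect e1 x y -> connect e2 (f x) (f y).
Proof.
move=> H x y /connectP [p pp ->]; apply/connectP; exists (map f p); last by rewrite last_map.
elim: p x pp => [|z p IH] x //= /andP [xz pz]; by rewrite H // IH.
Qed.

Lemma iso_clusters (S : finType) (N1 N2 : network S) :
  net_iso N1 N2 -> clusters N1 = clusters N2.
Proof.
move=> [f [[g fg gf] Ef Lf]].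
have Eg : forall a b, @edge S N1 (g a) (g b) = @edge S N2 a b.
  by move=> a b; rewrite -Ef !gf.
have Cf : forall v, cluster (f v) = cluster v.
  move=> v; apply/setP => s; rewrite !inE -Lf; apply/idP/idP.
    move=> /(conn_map (e1 := @edge S N2) (e2 := @edge S N1) (f := g)).
    by rewrite !fg; apply => a b; rewrite Eg.
  by apply: conn_map => a b; rewrite Ef.
apply/setP => X; apply/imsetP/imsetP => [[v _ ->]|[w _ ->]].
  by exists (f v) => //; rewrite Cf.
by exists (g w) => //; rewrite -Cf gf.
Qed.

Theorem theorem8 (S : finType) (N1 N2 : network S) :
  tree_child_network N1 -> tree_child_network N2 ->
  no_parent_paths N1 -> no_parent_paths N2 ->
  net_iso N1 N2 <-> clusters N1 = clusters N2.
Proof.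
move=> tc1 tc2 npp1 npp2; split; first exact: iso_clusters.
move=> eqCl.
have [[_ [r1 _] _] _] := tc1.
have [[_ [r2 _] _] _] := tc2.
exists (fmap r2 : node N1 -> node N2); split.
- exists (fmap r1); first exact: fmap_cancel.
  exact: (fmap_cancel tc2 tc1 npp2 npp1 (esym eqCl)).
- move=> x y; apply/idP/idP; last exact: fmap_edge.
  move=> H; rewrite -(fmap_cancel tc1 tc2 npp1 npp2 eqCl r2 r1 x).
  rewrite -(fmap_cancel tc1 tc2 npp1 npp2 eqCl r2 r1 y).
  exact: (fmap_edge tc2 tc1 npp2 npp1 (esym eqCl)).
- move=> s; have tl := leaf_tree tc1 (lbl_leaf tc1 s).
  rewrite (fmap_tree r2 tl); have [tw cw] := tmap_spec tc2 eqCl r2 tl.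
  apply: (tree_inj tc2 npp2 tw (leaf_tree tc2 (lbl_leaf tc2 s))).
  by rewrite cw !cluster_lbl.
Qed.
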